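(* Let $n\ge1$, $\hat r\in\mathbb R^n$, $\delta\ge0$. For every $\pi\in\Delta_n$, $$\max_{\|\Delta\|_1\le\delta}\mathrm{Reg}(\pi,\hat r+\Delta)=\delta+\max_{1\le i\le n}(\hat r_i-\delta\pi_i)-\langle\pi,\hat r\rangle.$$ Moreover, the maximum is attained by $\Delta^\star=\delta e_k$ for any $k\in\arg\max_{1\le i\le n}\{\hat r_i-\delta\pi_i\}$.
   Context: $\Delta_n:=\{q\in\mathbb R^n_+:\sum_iq_i=1\}$. For $\pi\in\Delta_n$ and $s\in\mathbb R^n$, the regret is $\mathrm{Reg}(\pi,s):=\max_{\beta\in\Delta_n}\langle\beta-\pi,s\rangle$. $e_k$ denotes the $k$-th standard basis vector of $\mathbb R^n$. *)

(* Defs.v *)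
From HB Require Import structures.
From mathcomp Require Import all_boot all_order all_algebra.
From mathcomp Require Import classical_sets reals.
Set Implicit Arguments. Unset Strict Implicit. Unset Printing Implicit Defensive.
Import Order.TTheory GRing.Theory Num.Theory.
Local Open Scope ring_scope.
Local Open Scope classical_set_scope.

Section Defs.
Variables (R : realType) (n : nat).

Definition dotp (x y : 'I_n -> R) : R := \sum_(i < n) x i * y i.

Definition norm1 (x : 'I_n -> R) : R := \sum_(i < n) `|x i|.

Definition simplex : set ('I_n -> R) :=
  [set q | (forall i, 0 <= q i) /\ \sum_(i < n) q i = 1].

(* Reg(pi, s) = max_{beta in Delta_n} <beta - pi, s>  (the sup is attained:
   the simplex is compact and the map is linear) *)
Definition Reg (pi s : 'I_n -> R) : R :=
  sup [set dotp (fun i => beta i - pi i) s | beta in simplex].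

(* max_{1<=i<=n} f i, as the sup of a finite nonempty set (for n >= 1) *)
Definition maxI (f : 'I_n -> R) : R := sup (range f).

Definition basis_e (k : 'I_n) : 'I_n -> R := fun i => (i == k)%:R.

End Defs.

(* Main.v *)
Require Import Defs.
From HB Require Import structures.
From mathcomp Require Import all_boot all_order all_algebra.
From mathcomp Require Import classical_sets reals.
From mathcomp Require Import lra.
Import Order.TTheory GRing.Theory Num.Theory.
Local Open Scope ring_scope.

Section Helpers.
Variables (R : realType) (n : nat).

Lemma sup_att (E : set R) x : E x -> ubound E x -> sup E = x.
Proof.
move=> Ex ub; apply/le_anti/andP; split.
  by apply: ge_sup => //; exists x.
by apply: (ub_le_sup); [exists x|].
Qed.

Lemma exmax (f : 'I_n -> R) (i0 : 'I_n) : exists j, forall i, f i <= f j.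
Proof.
case: (@arg_maxP _ _ _ i0 xpredT f erefl) => j _ H.
by exists j => i; apply: H.
Qed.

Lemma maxI_ge (f : 'I_n -> R) (i0 : 'I_n) i : f i <= maxI f.
Proof.
have [j Hj] := exmax f i0.
apply: ub_le_sup; last by exists i.
by exists (f j) => _ [k _ <-].
Qed.

Lemma maxI_eq (f : 'I_n -> R) j : (forall i, f i <= f j) -> maxI f = f j.
Proof.
move=> Hj; apply: sup_att; first by exists j.
by move=> _ [k _ <-].
Qed.

Lemma dot_e (j : 'I_n) (s : 'I_n -> R) : dotp (basis_e R j) s = s j.
Proof.
rewrite /dotp (bigD1 j) //= big1 ?addr0 /basis_e ?eqxx ?mul1r //.
by move=> i /negbTE ->; rewrite mul0r.
Qed.

Lemma Reg_eq (pi s : 'I_n -> R) j : (forall i, s i <= s j) ->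
  Reg pi s = s j - dotp pi s.
Proof.
move=> Hj; apply: sup_att.
  exists (basis_e R j).
    split; first by move=> i; rewrite /basis_e ler0n.
    rewrite (bigD1 j) //= big1 ?addr0 /basis_e ?eqxx //.
    by move=> i /negbTE ->.
  rewrite /dotp -(dot_e j s) /dotp -sumrB; apply: eq_bigr => i _; by rewrite mulrBl.
move=> _ [b [b0 b1] <-].
have -> : dotp (fun i => b i - pi i) s = dotp b s - dotp pi s.
  by rewrite /dotp -sumrB; apply: eq_bigr => i _; rewrite mulrBl.
rewrite lerD2r.
apply: (@le_trans _ _ (\sum_(i < n) b i * s j)).
  by apply: ler_sum => i _; rewrite ler_wpM2l.
by rewrite -mulr_suml b1 mul1r.
Qed.

Lemma pi_bound (pi : 'I_n -> R) (i j : 'I_n) :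
  (forall i, 0 <= pi i) -> \sum_(i < n) pi i = 1 ->
  `|basis_e R j i - pi i| <= 1 - pi j.
Proof.
move=> p0 p1; rewrite /basis_e.
have pj1 : pi j + \sum_(k < n | k != j) pi k = 1 by rewrite -p1 [in RHS](bigD1 j).
have s0 : 0 <= \sum_(k < n | k != j) pi k by apply: sumr_ge0.
case: eqVneq => [->|ij]; rewrite ?eqxx /=.
  rewrite ger0_norm; last by rewrite subr_ge0 -pj1 lerDl.
  by [].
have : pi i <= \sum_(k < n | k != j) pi k.
  by rewrite (bigD1 i) //= lerDl; apply: sumr_ge0.
move=> h; rewrite sub0r normrN ger0_norm // -pj1 [pi j + _]addrC addrK //.
Qed.

Lemma key (pi D : 'I_n -> R) (delta : R) (j : 'I_n) :
  (forall i, 0 <= pi i) -> \sum_(i < n) pi i = 1 ->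
  norm1 D <= delta ->
  D j - dotp pi D <= delta - delta * pi j.
Proof.
move=> p0 p1 nD.
have pj : 0 <= 1 - pi j.
  have := @pi_bound pi j j p0 p1; apply: le_trans; exact: normr_ge0.
rewrite -(dot_e j D) /dotp -sumrB.
apply: (@le_trans _ _ (\sum_(i < n) (1 - pi j) * `|D i|)).
  apply: ler_sum => i _; rewrite -mulrBl.
  apply: le_trans (ler_norm _) _; rewrite normrM.
  by apply: ler_wpM2r => //; exact: pi_bound.
rewrite -mulr_sumr -/(norm1 D) [_ * norm1 D]mulrC -[delta - _]mulr1 mulr1 -{1}[delta]mulr1 -mulrBr.
by apply: ler_wpM2r.
Qed.

End Helpers.
Arguments sup_att {R}.
Arguments exmax {R n}.
Arguments maxI_ge {R n}.
Arguments maxI_eq {R n}.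
Arguments dot_e {R n}.
Arguments Reg_eq {R n}.
Arguments pi_bound {R n}.
Arguments key {R n pi D delta}.

Theorem mainTheorem4 (R : realType) (n : nat) (rhat : 'I_n -> R) (delta : R) :
  (1 <= n)%N -> 0 <= delta ->
  forall pi : 'I_n -> R, simplex pi ->
  let V := delta + maxI (fun i => rhat i - delta * pi i) - dotp pi rhat in
  (forall D : 'I_n -> R, norm1 D <= delta ->
     Reg pi (fun i => rhat i + D i) <= V) /\
  (forall k : 'I_n,
     (forall i : 'I_n, rhat i - delta * pi i <= rhat k - delta * pi k) ->
     norm1 (fun i => delta * basis_e R k i) <= delta /\
     Reg pi (fun i => rhat i + delta * basis_e R k i) = V).
Proof.
move=> n1 d0 pi [p0 p1] V.
have i0 : 'I_n := Ordinal n1.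
have dotD : forall D, dotp pi (fun i => rhat i + D i) = dotp pi rhat + dotp pi D.
  by move=> D; rewrite /dotp -big_split; apply: eq_bigr => i _; rewrite mulrDr.
have P1 : forall D : 'I_n -> R, norm1 D <= delta ->
     Reg pi (fun i => rhat i + D i) <= V.
  move=> D nD.
  have [j Hj] := exmax (fun i => rhat i + D i) i0.
  rewrite (Reg_eq _ _ _ Hj) dotD /V.
  have K := key j p0 p1 nD.
  have M := maxI_ge (fun i => rhat i - delta * pi i) i0 j.
  rewrite /= in M.
  move: K M; generalize (maxI (fun i => rhat i - delta * pi i)) (dotp pi D) (dotp pi rhat) (delta * pi j) => m a b c K M.
  lra.
split => // k Hk; split.
  rewrite /norm1 (bigD1 k) //= big1 ?addr0 /basis_e ?eqxx ?mulr1 ?ger0_norm //.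
  by move=> i /negbTE ->; rewrite mulr0 normr0.
apply/le_anti/andP; split; first apply: P1.
  rewrite /norm1 (bigD1 k) //= big1 ?addr0 /basis_e ?eqxx ?mulr1 ?ger0_norm //.
  by move=> i /negbTE ->; rewrite mulr0 normr0.
have [j Hj] := exmax (fun i => rhat i + delta * basis_e R k i) i0.
rewrite (Reg_eq _ _ _ Hj) /V (maxI_eq _ _ Hk) dotD.
have E : dotp pi (fun i => delta * basis_e R k i) = delta * pi k.
  rewrite /dotp (bigD1 k) //= big1 ?addr0 /basis_e ?eqxx ?mulr1 //.
  by rewrite mulrC.
  by move=> i /negbTE ->; rewrite mulr0 mulr0.
rewrite E; have := Hj k; rewrite /basis_e eqxx mulr1.
move: (delta * pi k) (delta * (j == k)%:R) (dotp pi rhat) => a b c.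
lra.
Qed.
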